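(* In the general weighted-SGD framework of the context, specialized to the two-arm linear regression model, with weights of the form $w_t=\varphi\big(\mathbb{P}(A_t\mid X_t,\theta_{t-1})\big)$ and under Assumptions (A1)–(A5), the vanilla choice $\varphi\equiv1$ has the optimal asymptotic covariance matrix: $\Sigma_{\mathrm{vnl}}\preceq\tilde\Sigma$, where $\Sigma_{\mathrm{vnl}}=H^{-1}SH^{-1}$ is the asymptotic covariance matrix for $\varphi\equiv1$ and $\tilde\Sigma=H^{-1}SH^{-1}$ is the asymptotic covariance matrix under any other weighting function $\varphi$ (with $H,S$ computed for the respective weights).
   Context: Framework: finite action set $\mathcal{A}$; $\{X_t,Y_t(a):a\in\mathcal{A}\}$ i.i.d. from $\mathcal{P}$; $A_t\sim\pi(X_t,\theta_{t-1})$, $Y_t=Y_t(A_t)$, $\zeta_t=(X_t,A_t,Y_t)$. Two-arm linear regression model: $\mathcal{A}=\{0,1\}$, $\theta\in\mathbb{R}^{2p}$ with blocks $\theta_{[1:p]}$, $\theta_{[p+1:2p]}$ (subvectors of coordinates), $Y_t=(1-A_t)X_t^\top\theta^*_{[1:p]}+A_tX_t^\top\theta^*_{[p+1:2p]}+\mathcal{E}_t$, $\mathcal{E}_t$ i.i.d. mean zero, variance $\sigma^2$, $\theta^*_{[1:p]}\ne\theta^*_{[p+1:2p]}$; loss $\ell(\theta;\zeta_t)=\tfrac12(1-A_t)(Y_t-X_t^\top\theta_{[1:p]})^2+\tfrac12A_t(Y_t-X_t^\top\theta_{[p+1:2p]})^2$. Weighted SGD $\theta_t=\theta_{t-1}-\eta_tw_t\nabla\ell(\theta_{t-1};\zeta_t)$,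 $\eta_t=\eta_0t^{-\alpha}$, $\alpha\in(1/2,1)$, $\bar\theta_t=t^{-1}\sum_{s=0}^{t-1}\theta_s$. With $w(\theta';X,A)=\varphi(\mathbb{P}_{\pi(X,\theta')}(A))$, define $\mathcal{L}_{\theta'}(\theta)=\mathbb{E}_{\mathcal{P}}[\mathbb{E}_{A\sim\pi(X,\theta')}(w(\theta';X,A)\ell(\theta;X,A,Y)\mid X)]$, $\xi_{\theta'}(\theta;\zeta)=w(\theta';X,A)\nabla\ell(\theta;\zeta)-\nabla\mathcal{L}_{\theta'}(\theta)$, $H=\nabla^2\mathcal{L}_{\theta^*}(\theta^* )$, $S=\mathbb{E}[\xi_{\theta^*}(\theta^*;\zeta)\xi_{\theta^*}(\theta^*;\zeta)^\top]$, and $\Delta(X,\theta)=d_{TV}(\pi(X,\theta),\pi(X,\theta^* ))$. (A1) $0<\underline w<w_t<\overline w$ for all $t$. (A2) $\mathcal{L}_{\theta'}(\theta)$ convex and continuously differentiable in $\theta$, twice continuously differentiable at $\theta^*$; $\exists\delta,\lambda>0$: $\langle\nabla\mathcal{L}_\theta(\theta),\theta-\theta^*\rangle>0$ for $\theta\ne\theta^*$ and $\ge\lambda\|\theta-\theta^*\|^2$ for $\|\theta-\theta^*\|\le\delta$. (A3) $\nabla^2\mathcal{L}_{\theta'}(\theta)$ exists everywhere, $H\succ0$, and $\|\nabla^2\mathcal{L}_{\theta'}(\theta)-H\|\le K\|\theta-\theta^*\|+K\|\theta'-\theta^*\|$ when $\|\theta-\theta^*\|+\|\theta'-\theta^*\|\le2\delta$.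 (A4) $\mathbb{E}(\|\nabla\ell(\theta;\zeta)\|^2\mid X,A)\le\phi(X)(1+\|\theta-\theta^*\|^2)$ with $\mathbb{E}\phi(X)=\kappa>0$, and $S$ exists. (A5) $\lim_{\theta\to\theta^*}\mathbb{E}[\Delta(X,\theta)\phi(X)]=0$, $\lim_{\theta\to\theta^*}\mathbb{E}[\|\nabla\ell(\theta;\zeta)-\nabla\ell(\theta^*;\zeta)\|^2\mid X,A]=0$, $\lim_{\theta\to\theta^*}\mathbb{E}_X[|w(\theta;X,A)-w(\theta^*;X,A)|^2\phi(X)\mid A]=0$. For symmetric matrices, $\Sigma\preceq\tilde\Sigma$ means $\tilde\Sigma-\Sigma$ is positive semidefinite. *)

(* Defs.v *)
From HB Require Import structures.
From mathcomp Require Import all_boot all_order all_algebra.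
From mathcomp Require Import all_classical all_reals all_analysis.
Set Implicit Arguments. Unset Strict Implicit. Unset Printing Implicit Defensive.
Import Order.TTheory GRing.Theory Num.Theory.
Import numFieldNormedType.Exports.
Local Open Scope classical_set_scope.
Local Open Scope ring_scope.

Section TwoArm.
Context {R : realType} {p : nat}.
Context {d : measure_display} {T : measurableType d}.
(* mu : law of the covariate source; X t : covariate vector in R^p *)
Context (mu : probability T R) (X : T -> 'cV[R]_p).
(* nu : law of the noise E_t (independent of X_t) *)
Context (nu : probability R R).
(* true parameter thetas = (thetas_[1:p] ; thetas_[p+1:2p]) *)
Context (thetas : 'cV[R]_(p + p)).
(* two-arm policy: pi1 x th = P_{pi(x,th)}(A = 1) *)
Context (pi1 : 'cV[R]_p -> 'cV[R]_(p + p) -> R).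

Definition dotv n (u v : 'cV[R]_n) : R := (u^T *m v) 0 0.
Definition enorm n (v : 'cV[R]_n) : R := Num.sqrt (dotv v v).
Definition fnorm m n (M : 'M[R]_(m, n)) : R :=
  Num.sqrt (\sum_i \sum_j M i j ^+ 2).
Definition loewner_le n (A B : 'M[R]_n) : Prop :=
  forall v : 'cV[R]_n, dotv v (A *m v) <= dotv v (B *m v).
Definition posdef n (A : 'M[R]_n) : Prop :=
  forall v : 'cV[R]_n, v != 0 -> 0 < dotv v (A *m v).
Definition convex_fun n (f : 'cV[R]_n -> R) : Prop :=
  forall (x y : 'cV[R]_n) (t : R), 0 <= t <= 1 ->
    f (t *: x + (1 - t) *: y) <= t * f x + (1 - t) * f y.

Definition grad n (f : 'cV[R]_n -> R) (th : 'cV[R]_n) : 'cV[R]_n :=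
  \col_i derive f th (delta_mx i 0).
Definition hess n (f : 'cV[R]_n -> R) (th : 'cV[R]_n) : 'M[R]_n :=
  \matrix_(i, j) derive (fun u => derive f u (delta_mx i 0)) th (delta_mx j 0).

(* actions are booleans: true = arm 1, false = arm 0 *)
Definition actR (a : bool) : R := if a then 1 else 0.
Definition probA (x : 'cV[R]_p) (th : 'cV[R]_(p + p)) (a : bool) : R :=
  if a then pi1 x th else 1 - pi1 x th.
Definition DeltaTV (x : 'cV[R]_p) (th : 'cV[R]_(p + p)) : R :=
  2^-1 * \sum_(a : bool) `|probA x th a - probA x thetas a|.

Definition lin (x : 'cV[R]_p) (b : 'cV[R]_p) : R := (x^T *m b) 0 0.
Definition Yobs (x : 'cV[R]_p) (a : bool) (e : R) : R :=
  (1 - actR a) * lin x (usubmx thetas) + actR a * lin x (dsubmx thetas) + e.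
Definition loss (th : 'cV[R]_(p + p)) (x : 'cV[R]_p) (a : bool) (y : R) : R :=
  2^-1 * (1 - actR a) * (y - lin x (usubmx th)) ^+ 2
  + 2^-1 * actR a * (y - lin x (dsubmx th)) ^+ 2.
Definition gradloss (th : 'cV[R]_(p + p)) (x : 'cV[R]_p) (a : bool) (y : R)
  : 'cV[R]_(p + p) := grad (fun u => loss u x a y) th.

Definition Ex (f : T * R -> R) : R :=
  fine (\int[(mu \x nu)%E]_z (f z)%:E)%E.
Definition ExX (f : T -> R) : R := fine (\int[mu]_t (f t)%:E)%E.

Section Weight.
Variable phi : R -> R.
Definition wgt (th' : 'cV[R]_(p + p)) (x : 'cV[R]_p) (a : bool) : R :=
  phi (probA x th' a).
Definition Lfun (th' th : 'cV[R]_(p + p)) : R :=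
  Ex (fun z => \sum_(a : bool)
        probA (X z.1) th' a * (wgt th' (X z.1) a * loss th (X z.1) a (Yobs (X z.1) a z.2))).
Definition xi (th' th : 'cV[R]_(p + p)) (x : 'cV[R]_p) (a : bool) (y : R)
  : 'cV[R]_(p + p) :=
  wgt th' x a *: gradloss th x a y - grad (Lfun th') th.
Definition Hmat : 'M[R]_(p + p) := hess (Lfun thetas) thetas.
Definition Sint (i j : 'I_(p + p)) (z : T * R) (a : bool) : R :=
  let x := X z.1 in let v := xi thetas thetas x a (Yobs x a z.2) in
  (v *m v^T) i j.
Definition Smat : 'M[R]_(p + p) :=
  \matrix_(i, j) Ex (fun z => \sum_(a : bool) probA (X z.1) thetas a * Sint i j z a).
Definition Sigma : 'M[R]_(p + p) := invmx Hmat *m Smat *m invmx Hmat.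

Definition assumptions : Prop :=
  (exists wl wh : R, 0 < wl /\ forall t th a, 0 < probA (X t) th a ->
      wl < wgt th (X t) a < wh) /\
  (* L_{th'}(th) is a well-defined (finite) expectation *)
  (forall th' th, (mu \x nu)%E.-integrable setT (fun z => (\sum_(a : bool)
        probA (X z.1) th' a * (wgt th' (X z.1) a *
           loss th (X z.1) a (Yobs (X z.1) a z.2)))%:E)) /\
  (* (A2) and (A3) with a common delta *)
  (forall th', convex_fun (Lfun th')
     /\ (forall th, differentiable (Lfun th') th)
     /\ continuous (grad (Lfun th'))
     /\ (forall th, differentiable (grad (Lfun th')) th)
     /\ {for thetas, continuous (hess (Lfun th'))}) /\
  (exists delta lam : R, 0 < delta /\ 0 < lam /\
     (forall th, th != thetas -> 0 < dotv (grad (Lfun th) th) (th - thetas)) /\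
     (forall th, enorm (th - thetas) <= delta ->
        lam * enorm (th - thetas) ^+ 2 <= dotv (grad (Lfun th) th) (th - thetas)) /\
     posdef Hmat /\
     (exists K : R, forall th th',
        enorm (th - thetas) + enorm (th' - thetas) <= 2 * delta ->
        fnorm (hess (Lfun th') th - Hmat)
          <= K * enorm (th - thetas) + K * enorm (th' - thetas))) /\
  (* (A4) and (A5), sharing the function phi4 (written phi(X) in the paper) *)
  (exists (phi4 : 'cV[R]_p -> R) (kappa : R),
     mu.-integrable setT (fun t => (phi4 (X t))%:E) /\
     ExX (fun t => phi4 (X t)) = kappa /\ 0 < kappa /\
     (forall th t a,
        (\int[nu]_e (enorm (gradloss th (X t) a (Yobs (X t) a e)) ^+ 2)%:E
          <= (phi4 (X t) * (1 + enorm (th - thetas) ^+ 2))%:E)%E) /\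
     (* (A4): S exists *)
     (forall i j, (mu \x nu)%E.-integrable setT
        (fun z => (\sum_(a : bool) probA (X z.1) thetas a * `|Sint i j z a|)%:E)) /\
     (ExX (fun t => DeltaTV (X t) th * phi4 (X t)) @[th --> thetas] --> 0) /\
     (forall t a,
        fine (\int[nu]_e (enorm (gradloss th (X t) a (Yobs (X t) a e)
                 - gradloss thetas (X t) a (Yobs (X t) a e)) ^+ 2)%:E)%E
          @[th --> thetas] --> 0) /\
     (forall a,
        ExX (fun t => `|wgt th (X t) a - wgt thetas (X t) a| ^+ 2 * phi4 (X t))
          @[th --> thetas] --> 0)).
End Weight.

Definition model_assumptions (sigma : R) : Prop :=
  (forall i : 'I_p, measurable_fun setT (fun t => X t i 0)) /\
  nu.-integrable setT (fun e => (e ^+ 2)%:E) /\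
  (\int[nu]_e e%:E = 0)%E /\
  (\int[nu]_e (e ^+ 2)%:E = (sigma ^+ 2)%:E)%E /\
  usubmx thetas != dsubmx thetas /\
  (forall x th, 0 <= pi1 x th <= 1).

End TwoArm.

(* Main.v *)
Require Import Defs.
From HB Require Import structures.
From mathcomp Require Import all_boot all_order all_algebra.
From mathcomp Require Import all_classical all_reals all_analysis.
From mathcomp Require Import ring lra measurable_realfun.
Import Order.TTheory GRing.Theory Num.Theory.
Import numFieldNormedType.Exports.
Local Open Scope classical_set_scope.
Local Open Scope ring_scope.

Lemma derive_poly2 (R : realType) (V : normedModType R) (f : V -> R) (a v : V) (A B C : R) :
  (forall h : R, f (a + h *: v) = A + h * B + h ^+ 2 * C) -> derive f a v = B.
Proof.
move=> hf; rewrite /derive.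
have fa : f a = A by have := hf 0; rewrite scale0r addr0 => ->; ring.
apply: cvg_lim => //.
apply: (@cvg_trans _ ((fun h : R => B + h * C) @ 0^')).
  apply: near_eq_cvg; near=> h.
  have h0 : h != 0 by near: h; exact: nbhs_dnbhs_neq.
  rewrite /= [h *: v + a]addrC hf fa /GRing.scale /=.
  by field.
apply: cvg_within_filter.
have := cvgD (cvg_cst B : (fun _ : R => B) @ nbhs (0:R) --> B) (cvgM (@cvg_id _ (nbhs (0:R))) (cvg_cst C : (fun _ : R => C) @ nbhs (0:R) --> C)).
by rewrite mul0r addr0; apply.
Unshelve. all: by end_near.
Qed.

Section Rint.
Context {R : realType} {d' : measure_display} {U : measurableType d'}.
Variable m : {measure set U -> \bar R}.

Definition Rint (f : U -> R) := m.-integrable setT (EFin \o f).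
Definition RI (f : U -> R) : R := fine (\int[m]_z (f z)%:E)%E.

Lemma Rint_eq f g : f =1 g -> Rint f -> Rint g.
Proof. by move=> fg; apply: eq_integrable => // z _ /=; rewrite fg. Qed.
Arguments Rint_eq {f g}.

Lemma RI_eq f g : f =1 g -> RI f = RI g.
Proof. by move=> fg; rewrite /RI; congr fine; apply: eq_integral => z _; rewrite fg. Qed.
Arguments RI_eq {f g}.

Lemma RintD f g : Rint f -> Rint g -> Rint (fun z => f z + g z).
Proof.
move=> hf hg; have := integrableD measurableT hf hg.
by apply: eq_integrable => // z _ /=; rewrite EFinD.
Qed.
Arguments RintD {f g}.

Lemma RintZ k f : Rint f -> Rint (fun z => k * f z).
Proof.
move=> hf; have := integrableZl measurableT k hf.
by apply: eq_integrable => // z _ /=; rewrite EFinM.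
Qed.
Arguments RintZ k {f}.

Lemma RintN f : Rint f -> Rint (fun z => - f z).
Proof. by move=> hf; apply: (Rint_eq _ (RintZ (-1) hf)) => z; rewrite mulN1r. Qed.
Arguments RintN {f}.

Lemma RintB f g : Rint f -> Rint g -> Rint (fun z => f z - g z).
Proof. by move=> hf hg; apply: RintD => //; exact: RintN. Qed.
Arguments RintB {f g}.

Lemma RID f g : Rint f -> Rint g -> RI (fun z => f z + g z) = RI f + RI g.
Proof. by move=> hf hg; have := RintegralD measurableT hf hg. Qed.
Arguments RID {f g}.

Lemma RIZ k f : Rint f -> RI (fun z => k * f z) = k * RI f.
Proof. by move=> hf; have := RintegralZl k measurableT hf. Qed.
Arguments RIZ k {f}.

Lemma RIN f : Rint f -> RI (fun z => - f z) = - RI f.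
Proof. by move=> hf; rewrite -mulN1r -RIZ //; apply: RI_eq => z; rewrite mulN1r. Qed.
Arguments RIN {f}.

Lemma RIB f g : Rint f -> Rint g -> RI (fun z => f z - g z) = RI f - RI g.
Proof. by move=> hf hg; rewrite RID ?RIN //; exact: RintN. Qed.
Arguments RIB {f g}.

Lemma Rint_sum (I : finType) (f : I -> U -> R) :
  (forall i, Rint (f i)) -> Rint (fun z => \sum_i f i z).
Proof.
move=> hf; rewrite /index_enum; elim: (Finite.enum I) => [|i s IH].
  apply: (Rint_eq (f := fun=> 0)) => [z|]; first by rewrite big_nil.
  exact: integrable0.
apply: (Rint_eq (f := fun z => f i z + \sum_(j <- s) f j z)) => [z|]; first by rewrite big_cons.
exact: RintD.
Qed.

Lemma RI_sum (I : finType) (f : I -> U -> R) :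
  (forall i, Rint (f i)) -> RI (fun z => \sum_i f i z) = \sum_i RI (f i).
Proof.
move=> hf; rewrite /index_enum; elim: (Finite.enum I) => [|i s IH].
  rewrite big_nil (RI_eq (g := fun=> 0)) => [|z]; last by rewrite big_nil.
  by rewrite /RI integral0.
rewrite big_cons -IH (RI_eq (g := fun z => f i z + \sum_(j <- s) f j z)) => [|z]; last by rewrite big_cons.
rewrite RID //.
have : Rint (fun z => \sum_(j <- s) f j z).
  elim: s {IH} => [|k s IH2].
    apply: (Rint_eq (f := fun=> 0)) => [z|]; first by rewrite big_nil.
    exact: integrable0.
  apply: (Rint_eq (f := fun z => f k z + \sum_(j <- s) f j z)) => [z|]; first by rewrite big_cons.
  exact: RintD.
by [].
Qed.

Lemma RI_ge0 f : (forall z, 0 <= f z) -> 0 <= RI f.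
Proof. by move=> f0; rewrite fine_ge0 // integral_ge0 // => z _; rewrite lee_fin. Qed.

Lemma Rint_quad (F : R -> U -> R) (A B C : U -> R) :
  (forall h, Rint (F h)) -> (forall h z, F h z = A z + h * B z + h ^+ 2 * C z) ->
  [/\ Rint A, Rint B, Rint C & forall h, RI (F h) = RI A + h * RI B + h ^+ 2 * RI C].
Proof.
move=> hi hF.
have iA : Rint A by apply: (Rint_eq _ (hi 0)) => z; rewrite hF; ring.
have iB : Rint B.
  apply: (Rint_eq _ (RintZ (2^-1) (RintB (hi 1) (hi (-1))))) => z; rewrite !hF.
  by field.
have iC : Rint C.
  apply: (Rint_eq _ (RintB (RintZ (2^-1) (RintD (hi 1) (hi (-1)))) iA)) => z; rewrite !hF.
  by field.
split => // h.
rewrite (RI_eq (g := fun z => (A z + h * B z) + h ^+ 2 * C z)) // RID //; last by exact: RintZ.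
  by rewrite RID ?RIZ //; exact: RintZ.
by apply: RintD => //; exact: RintZ.
Qed.

End Rint.
Arguments Rint_eq {R d' U m f g}.
Arguments RI_eq {R d' U m f g}.
Arguments RintD {R d' U m f g}.
Arguments RintZ {R d' U m} k {f}.
Arguments RintN {R d' U m f}.
Arguments RintB {R d' U m f g}.
Arguments RID {R d' U m f g}.
Arguments RIZ {R d' U m} k {f}.
Arguments RIN {R d' U m f}.
Arguments RIB {R d' U m f g}.
Arguments Rint_sum {R d' U m I f}.
Arguments RI_sum {R d' U m I f}.
Arguments Rint_quad {R d' U m F A B C}.

Section Fub.
Context {R : realType} {d : measure_display} {T : measurableType d}.
Variables (mu : probability T R) (nu : probability R R).
Local Notation P := (mu \x nu)%E.

Lemma RI_fst (K : T -> R) : measurable_fun setT K -> Rint P (fun z => K z.1) ->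
  Rint mu K /\ RI P (fun z => K z.1) = RI mu K.
Proof.
move=> mK iK.
have mK1 : measurable_fun setT (fun z : T * R => K z.1) by exact: measurableT_comp.
split.
  apply/integrableP; split; first exact/measurable_EFinP.
  move/integrableP: iK => [_ iK]; apply: le_lt_trans iK; rewrite le_eqVlt; apply/orP; left; apply/eqP.
  rewrite (fubini_tonelli1 (fun z => `|(K z.1)%:E|)%E) //=; last first.
    by apply/measurable_EFinP; apply: measurableT_comp => //.
  apply: eq_integral => x _; rewrite /fubini_F /=.
  by rewrite integral_cst //= probability_setT mule1.
rewrite /RI.
rewrite -(@integral12_prod_meas1 _ _ _ _ _ mu nu (fun z => (K z.1)%:E)) //.
congr fine; apply: eq_integral => x _ /=.
by rewrite /fubini_F /= integral_cst //= probability_setT mule1.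
Qed.


Lemma int_e : nu.-integrable setT (fun e => (e ^+ 2)%:E) -> nu.-integrable setT (fun e => e%:E).
Proof.
move=> i2.
apply: (@le_integrable _ _ _ nu setT measurableT (fun e => e%:E) (fun e => ((1 + e ^+ 2)%:E))) => //.
- exact/measurable_EFinP.
- move=> e _ /=; rewrite lee_fin [`|1 + _|]ger0_norm; last by rewrite addr_ge0 // sqr_ge0.
  by case: (lerP 0 e) => he; [rewrite ger0_norm // | rewrite ltr0_norm //]; nra.
- have := integrableD measurableT (finite_measure_integrable_cst nu 1 measurableT) i2.
  by apply: eq_integrable => // e _ /=; rewrite EFinD.
Qed.

Lemma RI_e (g : T -> R) : nu.-integrable setT (fun e => e%:E) -> (\int[nu]_e e%:E = 0)%E ->
  Rint P (fun z => z.2 * g z.1) -> RI P (fun z => z.2 * g z.1) = 0.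
Proof.
move=> ie e0 iK; rewrite /RI -(@integral12_prod_meas1 _ _ _ _ _ mu nu (fun z => (z.2 * g z.1)%:E)) //.
rewrite (eq_integral (fun _ => 0%E)) ?integral0 // => x _.
rewrite /fubini_F /=.
under eq_integral do rewrite EFinM.
by rewrite integralZr // e0 mul0e.
Qed.

Lemma RI_e2 (D : T -> R) (s2 : R) : measurable_fun setT D ->
  nu.-integrable setT (fun e => (e ^+ 2)%:E) -> (\int[nu]_e (e ^+ 2)%:E = s2%:E)%E ->
  Rint P (fun z => z.2 ^+ 2 * D z.1) ->
  RI P (fun z => z.2 ^+ 2 * D z.1) = s2 * RI mu D /\ (s2 != 0 -> Rint mu D).
Proof.
move=> mD i2 e2 iK.
have s20 : 0 <= s2 by rewrite -lee_fin -e2 integral_ge0 // => e _; rewrite lee_fin sqr_ge0.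
have iD : s2 != 0 -> Rint mu D.
  move=> s2n0; apply/integrableP; split; first exact/measurable_EFinP.
  move/integrableP: iK => [_ iK].
  have iK' : (\int[P]_z `|(z.2 ^+ 2 * D z.1)%:E| < +oo)%E by [].
  move: iK'; rewrite (fubini_tonelli1 (fun z : T * R => `|(z.2 ^+ 2 * D z.1)%:E|)%E) //=; last first.
    apply/measurable_EFinP; apply: measurableT_comp => //.
    apply: measurable_funM => //; first exact: measurable_funX.
    exact: measurableT_comp.
  rewrite (eq_integral (fun x => s2%:E * `|D x|%:E)%E); last first.
    move=> x _; rewrite /fubini_F /=.
    under eq_integral do rewrite normrM EFinM ger0_norm ?sqr_ge0 //.
    by rewrite integralZr // e2.
  rewrite ge0_integralZl_EFin //; last first.
    by apply/measurable_EFinP; apply: measurableT_comp.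
  have s2p : 0 < s2 by rewrite lt_neqAle eq_sym s2n0 s20.
  have [->|] := eqVneq (\int[mu]_x `|D x|%:E)%E +oo%E; first by rewrite gt0_muley ?lte_fin // ltxx.
  move=> H _; rewrite lt_neqAle H leey //.
split => //.
rewrite /RI -(@integral12_prod_meas1 _ _ _ _ _ mu nu (fun z => (z.2 ^+ 2 * D z.1)%:E)) //.
have -> : (\int[mu]_x fubini_F nu (fun z : T * R => (z.2 ^+ 2 * D z.1)%:E) x)%E = (\int[mu]_x (s2 * D x)%:E)%E.
  apply: eq_integral => x _; rewrite /fubini_F /=.
  under eq_integral do rewrite EFinM.
  by rewrite integralZr // e2 -EFinM.
have [s2z|/iD iD'] := eqVneq s2 0.
  rewrite s2z mul0r (eq_integral (fun _ => 0%E)) ?integral0 // => x _.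
  by rewrite mul0r.
by have := RIZ s2 iD'; rewrite /RI => <-.
Qed.

End Fub.

Section Alg.
Context {R : realType} {p : nat}.

Lemma dotvDr n (b u v : 'cV[R]_n) : dotv b (u + v) = dotv b u + dotv b v.
Proof. by rewrite /dotv mulmxDr mxE. Qed.

Lemma dotvZr n (b u : 'cV[R]_n) c : dotv b (c *: u) = c * dotv b u.
Proof. by rewrite /dotv -scalemxAr mxE. Qed.

Lemma dotv_delta n (b : 'cV[R]_n) i : dotv b (delta_mx i 0) = b i 0.
Proof.
rewrite /dotv mxE (bigD1 i) //= big1 => [|j ji]; rewrite !mxE ?eqxx.
  by rewrite mulr1 addr0.
by rewrite (negbTE ji) mulr0.
Qed.

Lemma dotvE n (u v : 'cV[R]_n) : dotv u v = \sum_i u i 0 * v i 0.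
Proof. by rewrite /dotv mxE; apply: eq_bigr => i _; rewrite mxE. Qed.

Definition bv (x : 'cV[R]_p) (a : bool) : 'cV[R]_(p + p) :=
  col_mx ((1 - actR a) *: x) (actR a *: x).

Lemma dotv_bv x a th : dotv (bv x a) th =
  (1 - actR a) * lin x (usubmx th) + actR a * lin x (dsubmx th).
Proof.
rewrite /dotv /bv -[th in LHS]vsubmxK tr_col_mx mul_row_col !linearZ /=.
by rewrite -!scalemxAl mxE [X in X + _]mxE [X in _ + X]mxE.
Qed.

Lemma loss_bv th x a y : loss th x a y = 2^-1 * (y - dotv (bv x a) th) ^+ 2.
Proof. by rewrite /loss dotv_bv; case: a => /=; ring. Qed.

Lemma Yobs_bv thetas x a e : Yobs thetas x a e = dotv (bv x a) thetas + e.
Proof. by rewrite /Yobs dotv_bv. Qed.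

Lemma gradloss_thetas thetas x a e :
  gradloss thetas x a (Yobs thetas x a e) = (- e) *: bv x a.
Proof.
apply/matrixP => i j; rewrite (ord1 j) /gradloss /grad [LHS]mxE [RHS]mxE.
apply: (@derive_poly2 _ _ _ _ _ (2^-1 * e ^+ 2) _ (2^-1 * bv x a i 0 ^+ 2)) => h.
rewrite loss_bv Yobs_bv dotvDr dotvZr dotv_delta. by field.
Qed.

End Alg.

Section Model.
Context {R : realType} {p : nat} {d : measure_display} {T : measurableType d}.
Variables (mu : probability T R) (X : T -> 'cV[R]_p) (nu : probability R R).
Variables (thetas : 'cV[R]_(p + p)) (pi1 : 'cV[R]_p -> 'cV[R]_(p + p) -> R).
Local Notation P := (mu \x nu)%E.

Definition Lint phi th (z : (T * R)%type) := \sum_(a : bool) probA pi1 (X z.1) thetas a *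
  (wgt pi1 phi thetas (X z.1) a * loss th (X z.1) a (Yobs thetas (X z.1) a z.2)).


Lemma LfunE phi th : Defs.Lfun mu X nu thetas pi1 phi thetas th = RI P (Lint phi th).
Proof. by []. Qed.

Definition cc phi t a := probA pi1 (X t) thetas a * wgt pi1 phi thetas (X t) a.
Definition B1 phi th i (z : (T * R)%type) := \sum_(a : bool) cc phi z.1 a *
  ((dotv (bv (X z.1) a) th - Yobs thetas (X z.1) a z.2) * bv (X z.1) a i 0).
Definition Kf phi i j t := \sum_(a : bool) cc phi t a * (bv (X t) a i 0 * bv (X t) a j 0).

Lemma dL phi (hI : forall th, Rint P (Lint phi th)) th i :
  derive (Defs.Lfun mu X nu thetas pi1 phi thetas) th (delta_mx i 0) = RI P (B1 phi th i)
  /\ Rint P (B1 phi th i).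
Proof.
pose C := fun z : (T * R)%type => \sum_(a : bool) cc phi z.1 a * (2^-1 * bv (X z.1) a i 0 ^+ 2).
have hF : forall h z, Lint phi (th + h *: delta_mx i 0) z = Lint phi th z + h * B1 phi th i z + h ^+ 2 * C z.
  move=> h z; rewrite /Lint /B1 /C /cc !big_bool /= !loss_bv !dotvDr !dotvZr !dotv_delta.
  by field.
have [iA iB iC eq] := Rint_quad (fun h => hI _) hF.
split => //; apply: (@derive_poly2 _ _ _ _ _ (RI P (Lint phi th)) _
  (RI P (fun z => \sum_(a : bool) cc phi z.1 a * (2^-1 * bv (X z.1) a i 0 ^+ 2)))) => h.
exact: eq h.
Qed.

Lemma Hmat_E phi (hI : forall th, Rint P (Lint phi th)) i j :
  Hmat mu X nu thetas pi1 phi i j = RI P (fun z => Kf phi i j z.1)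
  /\ Rint P (fun z => Kf phi i j z.1).
Proof.
rewrite /Hmat /hess mxE.
have -> : (fun u => derive (Defs.Lfun mu X nu thetas pi1 phi thetas) u (delta_mx i 0)) =
   (fun u => RI P (B1 phi u i)) by apply: funext => u; rewrite (dL _ hI u i).1.
have hF : forall h z, B1 phi (thetas + h *: delta_mx j 0) i z = B1 phi thetas i z + h * Kf phi i j z.1 + h ^+ 2 * (fun _ => 0) z.
  move=> h z; rewrite /Kf /B1 /cc !big_bool /= !dotvDr !dotvZr !dotv_delta.
  by ring.
have [iA iB iC eq] := Rint_quad (fun h => (dL _ hI _ i).2) hF.
split => //; apply: (@derive_poly2 _ _ _ _ _ (RI P (B1 phi thetas i)) _ (RI P (fun _ => 0))) => h.
exact: eq h.
Qed.

Lemma grad0 phi (hI : forall th, Rint P (Lint phi th)) :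
  nu.-integrable setT (fun e => e%:E) -> (\int[nu]_e e%:E = 0)%E ->
  grad (Defs.Lfun mu X nu thetas pi1 phi thetas) thetas = 0.
Proof.
move=> ie e0; apply/matrixP => i j; rewrite (ord1 j) [LHS]mxE [RHS]mxE (dL _ hI thetas i).1.
have hB : B1 phi thetas i =1 (fun z => z.2 * (- \sum_(a : bool) cc phi z.1 a * bv (X z.1) a i 0)).
  by move=> z; rewrite /B1 !big_bool /= !Yobs_bv; ring.
rewrite (RI_eq hB); apply: (RI_e mu nu (fun t => - \sum_(a : bool) cc phi t a * bv (X t) a i 0) ie e0).
exact: (Rint_eq hB (dL _ hI thetas i).2).
Qed.

End Model.

Section Model2.
Context {R : realType} {p : nat} {d : measure_display} {T : measurableType d}.
Variables (mu : probability T R) (X : T -> 'cV[R]_p) (nu : probability R R).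
Variables (thetas : 'cV[R]_(p + p)) (pi1 : 'cV[R]_p -> 'cV[R]_(p + p) -> R) (sigma : R).
Local Notation P := (mu \x nu)%E.

Hypothesis hM : model_assumptions X nu thetas pi1 sigma.

Lemma hXm : forall i : 'I_p, measurable_fun setT (fun t => X t i 0).
Proof. by case: hM. Qed.
Lemma he2 : nu.-integrable setT (fun e => (e ^+ 2)%:E).
Proof. by case: hM => _ []. Qed.
Lemma he0 : (\int[nu]_e e%:E = 0)%E.
Proof. by case: hM => _ [_ []]. Qed.
Lemma hs2 : (\int[nu]_e (e ^+ 2)%:E = (sigma ^+ 2)%:E)%E.
Proof. by case: hM => _ [_ [_ []]]. Qed.
Lemma hpi : forall x th, 0 <= pi1 x th <= 1.
Proof. by case: hM => _ [_ [_ [_ []]]]. Qed.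
Lemma he1 : nu.-integrable setT (fun e => e%:E).
Proof. exact: (int_e nu he2). Qed.

Lemma probA_ge0 x th a : 0 <= probA pi1 x th a.
Proof. by rewrite /probA; case: a; have /andP[h1 h2] := hpi x th => //; rewrite subr_ge0. Qed.

Definition xx i t := col_mx (X t) (X t) i 0.
Definition sel (a : bool) (i : 'I_(p + p)) : R := bv (const_mx 1 : 'cV[R]_p) a i 0.

Lemma bv_sel (x : 'cV[R]_p) a i : bv x a i 0 = sel a i * col_mx x x i 0.
Proof.
rewrite /sel /bv; case: (splitP i) => k hk; [have -> : i = lshift p k by apply/val_inj|have -> : i = rshift p k by apply/val_inj].
  by rewrite !col_mxEu !mxE mulr1.
by rewrite !col_mxEd !mxE mulr1.
Qed.

Lemma sel_ge0 a i : 0 <= sel a i.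
Proof.
rewrite /sel /bv; case: (splitP i) => k hk; [have -> : i = lshift p k by apply/val_inj|have -> : i = rshift p k by apply/val_inj].
  by rewrite col_mxEu !mxE mulr1; case: a => /=; rewrite ?subrr ?subr0.
by rewrite col_mxEd !mxE mulr1; case: a => /=.
Qed.

Lemma mxx i : measurable_fun setT (xx i).
Proof.
rewrite /xx; case: (splitP i) => k hk; [have -> : i = lshift p k by apply/val_inj|have -> : i = rshift p k by apply/val_inj].
  by under eq_fun do rewrite col_mxEu; exact: hXm.
by under eq_fun do rewrite col_mxEd; exact: hXm.
Qed.

Definition Dm phi i j t := \sum_(a : bool) probA pi1 (X t) thetas a *
  (wgt pi1 phi thetas (X t) a ^+ 2 * (bv (X t) a i 0 * bv (X t) a j 0)).
Definition Dabs phi i j t := \sum_(a : bool) probA pi1 (X t) thetas a *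
  (wgt pi1 phi thetas (X t) a ^+ 2 * `|bv (X t) a i 0 * bv (X t) a j 0|).

Lemma Dm_sign phi i j t : Dm phi i j t =
  if 0 <= xx i t * xx j t then Dabs phi i j t else - Dabs phi i j t.
Proof.
have E : forall a (x y : R), `|sel a i * x * (sel a j * y)| = sel a i * sel a j * `|x * y|.
  move=> a x y; rewrite !normrM !(ger0_norm (sel_ge0 _ _)); ring.
rewrite /Dm /Dabs !big_bool /= !bv_sel -!/(xx _ t) !E.
case: ifP => h.
  by rewrite ger0_norm //; ring.
by rewrite ler0_norm; [ring | rewrite ltW // ltNge h].
Qed.

Lemma Dm_abs phi i j t : `|Dm phi i j t| = `|Dabs phi i j t|.
Proof. by rewrite Dm_sign; case: ifP => _; rewrite ?normrN. Qed.

Section Phi.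
Variable phi : R -> R.
Hypothesis hA : assumptions mu X nu thetas pi1 phi.

Lemma hI : forall th, Rint P (Lint X thetas pi1 phi th).
Proof. by move=> th; case: hA => _ [h _]; exact: h. Qed.

Lemma hSint : forall i j, (mu \x nu)%E.-integrable setT
        (fun z => (\sum_(a : bool) probA pi1 (X z.1) thetas a *
           `|Sint mu X nu thetas pi1 phi i j z a|)%:E).
Proof. by case: hA => _ [_ [_ [_ [phi4 [kappa [_ [_ [_ [_ [h _]]]]]]]]]]. Qed.

Lemma hpd : posdef (Hmat mu X nu thetas pi1 phi).
Proof. by case: hA => _ [_ [_ [[dl [lam [_ [_ [_ [_ [h _]]]]]]] _]]]. Qed.

Lemma Sint_E i j z a : Sint mu X nu thetas pi1 phi i j z a =
  z.2 ^+ 2 * (wgt pi1 phi thetas (X z.1) a ^+ 2 * (bv (X z.1) a i 0 * bv (X z.1) a j 0)).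
Proof.
rewrite /Sint /xi (grad0 mu X nu thetas pi1 phi hI he1 he0) subr0 gradloss_thetas.
set b := bv (X z.1) a; rewrite !mxE big_ord1 !mxE; change (0 : 'I_1) with (@ord0 0); ring.
Qed.

Lemma Sabs_E i j z : \sum_(a : bool) probA pi1 (X z.1) thetas a *
           `|Sint mu X nu thetas pi1 phi i j z a| = z.2 ^+ 2 * Dabs phi i j z.1.
Proof.
have E : forall u v q : R, `|u ^+ 2 * (v ^+ 2 * q)| = u ^+ 2 * (v ^+ 2 * `|q|).
  by move=> u v q; rewrite normrM (normrM (v ^+ 2)) (ger0_norm (sqr_ge0 u)) (ger0_norm (sqr_ge0 v)).
rewrite /Dabs !big_bool /= !Sint_E !E.
ring.
Qed.

Lemma mDabs i j : measurable_fun setT (Dabs phi i j).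
Proof.
have := measurable_int _ (hSint i j); move/measurable_EFinP.
under eq_fun do rewrite Sabs_E.
move=> mf.
have := measurableT_comp mf (measurable_fun_pair (@measurable_id _ _ setT) (measurable_cst (1:R))).
by apply: eq_measurable_fun => t _ /=; rewrite expr1n mul1r.
Qed.

Lemma mDm i j : measurable_fun setT (Dm phi i j).
Proof.
rewrite (_ : Dm phi i j = fun t => if 0 <= xx i t * xx j t then Dabs phi i j t else - Dabs phi i j t); last first.
  by apply: funext => t; exact: Dm_sign.
apply: measurable_fun_ifT.
- apply: measurable_fun_ler; first exact: measurable_cst.
  by apply: measurable_funM; exact: mxx.
- exact: mDabs.
- by apply: measurable_funN; exact: mDabs.
Qed.

Lemma Smat_E : Smat mu X nu thetas pi1 phi =
    sigma ^+ 2 *: \matrix_(i, j) RI mu (Dm phi i j) /\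
  (sigma ^+ 2 != 0 -> forall i j, Rint mu (Dm phi i j)).
Proof.
have key : forall i j, RI P (fun z => z.2 ^+ 2 * Dm phi i j z.1) = sigma ^+ 2 * RI mu (Dm phi i j) /\
    (sigma ^+ 2 != 0 -> Rint mu (Dm phi i j)).
  move=> i j; apply: (RI_e2 mu nu _ (sigma ^+ 2) (mDm i j) he2 hs2).
  apply: (@le_integrable _ _ _ P setT measurableT _ _ _ _ (hSint i j)).
  - apply/measurable_EFinP; apply: measurable_funM.
      exact: measurable_funX.
    exact: (measurableT_comp (mDm i j)).
  - by move=> z _ /=; rewrite Sabs_E lee_fin normrM Dm_abs -normrM.
split; last by move=> s0 i j; exact: (key i j).2.
apply/matrixP => i j; rewrite !mxE -(key i j).1.
have -> : Ex mu nu (fun z => \sum_(a : bool) probA pi1 (X z.1) thetas a *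
     Sint mu X nu thetas pi1 phi i j z a) =
   RI P (fun z => \sum_(a : bool) probA pi1 (X z.1) thetas a *
     Sint mu X nu thetas pi1 phi i j z a) by [].
apply: RI_eq => z; rewrite /Dm !big_bool /= !Sint_E; ring.
Qed.

Lemma Hmat_mu i j : Hmat mu X nu thetas pi1 phi i j = RI mu (Kf X thetas pi1 phi i j)
  /\ Rint mu (Kf X thetas pi1 phi i j).
Proof.
have [-> iK] := Hmat_E mu X nu thetas pi1 phi hI i j.
have mK : measurable_fun setT (Kf X thetas pi1 phi i j).
  have := measurable_int _ iK; move/measurable_EFinP => mf.
  exact: (measurableT_comp mf (measurable_fun_pair (@measurable_id _ _ setT) (measurable_cst (0:R)))).
by have [iK' ->] := RI_fst mu nu _ mK iK.
Qed.

End Phi.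

Lemma Dm1 i j t : Dm (fun _ => 1) i j t = Kf X thetas pi1 (fun _ => 1) i j t.
Proof. by rewrite /Dm /Kf /cc /wgt !big_bool /=; ring. Qed.

End Model2.

Section Mx.
Context {R : realType} {n : nat}.

Lemma dotvC (u w : 'cV[R]_n) : dotv u w = dotv w u.
Proof. by rewrite !dotvE; apply: eq_bigr => i _; rewrite mulrC. Qed.

Lemma dotv_mulT (v w : 'cV[R]_n) (B : 'M[R]_n) : dotv v (B *m w) = dotv (B^T *m v) w.
Proof. by rewrite /dotv trmx_mul trmxK mulmxA. Qed.

Lemma dotvZl_mx (v w : 'cV[R]_n) (B : 'M[R]_n) s : dotv v ((s *: B) *m w) = s * dotv v (B *m w).
Proof. by rewrite -scalemxAl dotvZr. Qed.

Lemma posdef_unit (A : 'M[R]_n) : posdef A -> A \in unitmx.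
Proof.
move=> hA; rewrite unitmxE unitfE; apply/negP => /det0P [v v0 vA].
have : v^T != 0 by apply: contra v0 => /eqP h; rewrite -[v]trmxK h trmx0.
move/hA; rewrite /dotv trmxK mulmxA vA mul0mx mxE ltxx.
by [].
Qed.

Lemma qfE (x y : 'cV[R]_n) (A : 'M[R]_n) :
  dotv x (A *m y) = \sum_i \sum_j x i 0 * y j 0 * A i j.
Proof.
rewrite dotvE; apply: eq_bigr => i _; rewrite mxE mulr_sumr.
by apply: eq_bigr => j _; ring.
Qed.

Lemma bilsum (F : bool -> R) (B : bool -> 'cV[R]_n) (x y : 'cV[R]_n) :
  \sum_i \sum_j x i 0 * y j 0 * (\sum_(a : bool) F a * (B a i 0 * B a j 0)) =
  \sum_(a : bool) F a * (dotv (B a) x * dotv (B a) y).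
Proof.
rewrite !big_bool /= !dotvE !mulr_suml !mulr_sumr -big_split /=.
apply: eq_bigr => i _; rewrite !mulr_sumr -big_split /=.
by apply: eq_bigr => j _; rewrite big_bool /=; ring.
Qed.


Lemma abstract_ineq (A0 A1 N : 'M[R]_n) (s : R) (v : 'cV[R]_n) :
  A0 \in unitmx -> A1 \in unitmx -> A1^T = A1 -> 0 <= s ->
  (s != 0 -> forall u m : 'cV[R]_n, 0 <= dotv u (N *m u) - 2 * dotv m (A1 *m u) + dotv m (A0 *m m)) ->
  dotv v (invmx A0 *m (s *: A0) *m invmx A0 *m v) <=
  dotv v (invmx A1 *m (s *: N) *m invmx A1 *m v).
Proof.
move=> u0 u1 sym s_ge0 hCS.
rewrite -(scalemxAr s (invmx A0) A0) mulVmx // -(scalemxAl s 1%:M (invmx A0)) mul1mx dotvZl_mx.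
rewrite -(scalemxAr s (invmx A1) N) -(scalemxAl s (invmx A1 *m N) (invmx A1)) dotvZl_mx.
have [s0|s0] := eqVneq s 0; first by rewrite s0 !mul0r.
have sp : 0 < s by rewrite lt_neqAle eq_sym s0 s_ge0.
rewrite ler_pM2l //.
set u := invmx A1 *m v.
have vE : v = A1 *m u by rewrite /u mulKVmx.
rewrite -!mulmxA -/u [in X in _ <= X]dotv_mulT trmx_inv sym -/u.
rewrite [in X in X <= _]vE.
set m := invmx A0 *m (A1 *m u).
have := hCS s0 u m.
have -> : A0 *m m = A1 *m u by rewrite /m mulKVmx.
rewrite [dotv m _]dotvC.
lra.
Qed.

End Mx.

Lemma qf_RI {R : realType} {d} {T : measurableType d} (mu : {measure set T -> \bar R}) {n : nat}
  (F : 'I_n -> 'I_n -> T -> R) (x y : 'cV[R]_n) :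
  (forall i j, Rint mu (F i j)) ->
  Rint mu (fun t => \sum_i \sum_j x i 0 * y j 0 * F i j t) /\
  \sum_i \sum_j x i 0 * y j 0 * RI mu (F i j) = RI mu (fun t => \sum_i \sum_j x i 0 * y j 0 * F i j t).
Proof.
move=> hF.
have hI : forall i, Rint mu (fun t => \sum_j x i 0 * y j 0 * F i j t).
  by move=> i; apply: Rint_sum => j; exact: RintZ.
split; first exact: Rint_sum.
rewrite RI_sum //; apply: eq_bigr => i _.
rewrite RI_sum => [|j]; last exact: RintZ.
by apply: eq_bigr => j _; rewrite RIZ.
Qed.

Lemma qfE' {R : realType} {n : nat} (x y : 'cV[R]_n) (A : 'M[R]_n) (E : 'I_n -> 'I_n -> R) :
  (forall i j, A i j = E i j) -> dotv x (A *m y) = \sum_i \sum_j x i 0 * y j 0 * E i j.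
Proof.
move=> hE; rewrite qfE; apply: eq_bigr => i _; apply: eq_bigr => j _; by rewrite hE.
Qed.

Section Main.
Context {R : realType} {p : nat} {d : measure_display} {T : measurableType d}.
Variables (mu : probability T R) (X : T -> 'cV[R]_p) (nu : probability R R).
Variables (thetas : 'cV[R]_(p + p)) (pi1 : 'cV[R]_p -> 'cV[R]_(p + p) -> R) (sigma : R).
Variable phi : R -> R.
Hypothesis hM : model_assumptions X nu thetas pi1 sigma.
Hypothesis hA1 : assumptions mu X nu thetas pi1 (fun _ => 1).
Hypothesis hA : assumptions mu X nu thetas pi1 phi.

Local Notation M0 := (Hmat mu X nu thetas pi1 (fun _ => 1)).
Local Notation M1 := (Hmat mu X nu thetas pi1 phi).
Local Notation N := (\matrix_(i, j) RI mu (Dm X thetas pi1 phi i j)).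

Lemma CS (s0 : sigma ^+ 2 != 0) (u m : 'cV[R]_(p + p)) :
  0 <= dotv u (N *m u) - 2 * dotv m (M1 *m u) + dotv m (M0 *m m).
Proof.
have iD := (Smat_E mu X nu thetas pi1 sigma hM phi hA).2 s0.
have iK1 := fun i j => (Hmat_mu mu X nu thetas pi1 phi hA i j).2.
have iK0 := fun i j => (Hmat_mu mu X nu thetas pi1 (fun _ => 1) hA1 i j).2.
rewrite (qfE' _ _ _ (fun i j => RI mu (Dm X thetas pi1 phi i j))); last by move=> i j; rewrite mxE.
rewrite (qfE' _ _ _ (fun i j => RI mu (Kf X thetas pi1 phi i j))); last first.
  by move=> i j; rewrite (Hmat_mu mu X nu thetas pi1 phi hA i j).1.
rewrite (qfE' _ _ _ (fun i j => RI mu (Kf X thetas pi1 (fun _ => 1) i j))); last first.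
  by move=> i j; rewrite (Hmat_mu mu X nu thetas pi1 (fun _ => 1) hA1 i j).1.
have [i1 ->] := qf_RI mu _ u u iD.
have [i2 ->] := qf_RI mu _ m u iK1.
have [i3 ->] := qf_RI mu _ m m iK0.
rewrite -RIZ // -RIB //; last exact: RintZ.
rewrite -RID //; last exact: RintB (RintZ _ _).
apply: RI_ge0 => t.
rewrite (eq_bigr (fun i => \sum_j u i 0 * u j 0 * \sum_(a : bool)
   (probA pi1 (X t) thetas a * wgt pi1 phi thetas (X t) a ^+ 2) *
   (bv (X t) a i 0 * bv (X t) a j 0))); last first.
  move=> i _; apply: eq_bigr => j _; congr (_ * _); rewrite /Dm.
  by apply: eq_bigr => a _; rewrite mulrA.
rewrite /Kf !bilsum !big_bool /cc /wgt /=.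
set pt := probA pi1 (X t) thetas true; set pf := probA pi1 (X t) thetas false.
have hpt : 0 <= pt by exact: (probA_ge0 X nu thetas pi1 sigma hM).
have hpf : 0 <= pf by exact: (probA_ge0 X nu thetas pi1 sigma hM).
set wt := phi pt; set wf := phi pf.
set at_ := dotv (bv (X t) true) u; set af := dotv (bv (X t) false) u.
set bt := dotv (bv (X t) true) m; set bf := dotv (bv (X t) false) m.
have hnn : 0 <= pt * (wt * at_ - bt) ^+ 2 + pf * (wf * af - bf) ^+ 2.
  by apply: addr_ge0; apply: mulr_ge0 => //; exact: sqr_ge0.
apply: (le_trans hnn); rewrite le_eqVlt; apply/orP; left; apply/eqP.
by rewrite /pt /pf /probA /=; ring.
Qed.


Lemma Hsym ph (hB : assumptions mu X nu thetas pi1 ph) :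
  (Hmat mu X nu thetas pi1 ph)^T = Hmat mu X nu thetas pi1 ph.
Proof.
apply/matrixP => i j; rewrite mxE !(Hmat_mu mu X nu thetas pi1 ph hB _ _).1.
by apply: RI_eq => t; rewrite /Kf; apply: eq_bigr => a _; rewrite [bv _ _ j 0 * _]mulrC.
Qed.

Lemma main_ineq : loewner_le (Sigma mu X nu thetas pi1 (fun _ => 1)) (Sigma mu X nu thetas pi1 phi).
Proof.
move=> v.
have u0 := posdef_unit _ (hpd mu X nu thetas pi1 (fun _ => 1) hA1).
have u1 := posdef_unit _ (hpd mu X nu thetas pi1 phi hA).
have [S1E _] := Smat_E mu X nu thetas pi1 sigma hM (fun _ => 1) hA1.
have [SpE _] := Smat_E mu X nu thetas pi1 sigma hM phi hA.
have M0E : \matrix_(i, j) RI mu (Dm X thetas pi1 (fun _ => 1) i j) = M0.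
  apply/matrixP => i j; rewrite mxE (Hmat_mu mu X nu thetas pi1 (fun _ => 1) hA1 i j).1.
  by apply: RI_eq => t; exact: Dm1.
rewrite /Sigma S1E SpE M0E.
exact: (@abstract_ineq _ _ M0 M1 N (sigma ^+ 2) v u0 u1 (Hsym phi hA) (sqr_ge0 sigma) CS).
Qed.

End Main.

Theorem corollary1 (R : realType) (p : nat) (d : measure_display) (T : measurableType d)
  (mu : probability T R) (X : T -> 'cV[R]_p) (nu : probability R R) (sigma : R)
  (thetas : 'cV[R]_(p + p)) (pi1 : 'cV[R]_p -> 'cV[R]_(p + p) -> R) (phi : R -> R) :
  model_assumptions X nu thetas pi1 sigma ->
  assumptions mu X nu thetas pi1 (fun _ => 1) ->
  assumptions mu X nu thetas pi1 phi ->
  loewner_le (Sigma mu X nu thetas pi1 (fun _ => 1)) (Sigma mu X nu thetas pi1 phi).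
Proof.
move=> hM hA1 hA.
exact: (@main_ineq R p d T mu X nu thetas pi1 sigma phi hM hA1 hA).
Qed.
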